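(* Let $\lambda=(\lambda_1,\dots,\lambda_r)$ be a partition of $n$ with conjugate $\lambda'=(\lambda'_1,\dots,\lambda'_{r'})$. Then $h_{2,1}(\lambda)$ is the largest index $j$ such that $x_j$ occurs in a monomial with non-zero coefficient of $q_{[\lambda_2,\dots,\lambda_r]}$, and $h_{1,2}(\lambda)$ is the largest index $j$ such that $x_j$ occurs in a monomial with non-zero coefficient of $q_{[\lambda'_2,\dots,\lambda'_{r'}]}$ (whenever these hook lengths are positive).
   Context: For a partition $\lambda$ and a cell $(x,y)$ of its Young diagram (row $x$, column $y$), $h_{x,y}(\lambda)$ denotes the hook length at $(x,y)$ (cells to the right in the row, plus cells below in the column, plus one); it is $0$ if $(x,y)$ is not a cell. For a partition $\mu$ of $m$, the character polynomial is $q_\mu(x_1,\dots,x_m)=\downarrow\Big(\sum_{\alpha\vdash m}\frac{\chi_\mu(\alpha)}{z_\alpha}\prod_{k=1}^m (k x_k-1)^{a_k}\Big)$, where $\alpha=(1^{a_1},\dots,m^{a_m})$ ranges over cycle types of $S_m$, $\chi_\mu$ is the irreducible character of $S_m$ indexed by $\mu$, $z_\alpha=\prod_k a_k!\,k^{a_k}$, and $\downarrow$ is the linear map sending $x_1^{c_1}\cdots x_m^{c_m}$ to $(x_1)_{c_1}\cdots(x_m)_{c_m}$ (falling factorials). One has $\chi_\lambda(\alpha)=q_{[\lambda_2,\dots,\lambda_r]}(a_1,\dots,a_{n-\lambda_1})$. *)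

(* Defs.v *)
From HB Require Import structures.
From mathcomp Require Import all_boot all_order all_algebra all_fingroup.
Set Implicit Arguments. Unset Strict Implicit. Unset Printing Implicit Defensive.
Import Order.TTheory GRing.Theory Num.Theory.
Local Open Scope ring_scope.

Definition is_partition (la : seq nat) : bool :=
  sorted geq la && all (fun x => (0 < x)%N) la.

Definition conj_part (la : seq nat) (y : nat) : nat := count (fun a => (y <= a)%N) la.

Definition conj_partition (la : seq nat) : seq nat :=
  mkseq (fun j => conj_part la j.+1) (head 0%N la).

(* lambda_x (1-indexed), 0 if x > length *)
Definition part (la : seq nat) (x : nat) : nat := nth 0%N la x.-1.

(* hook length h_{x,y}(lambda); 0 if (x,y) is not a cell *)
Definition hook (la : seq nat) (x y : nat) : nat :=
  if [&& (1 <= x)%N, (1 <= y)%N & (y <= part la x)%N]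
  then ((part la x - y) + (conj_part la y - x) + 1)%N
  else 0%N.

(* chi_mu(alpha), alpha given as a list of cycle lengths, via
   chi_mu(alpha) = <s_mu, p_alpha>, s_mu = det (h_{mu_i - i + j}) (Jacobi-Trudi),
   <prod_i h_{nu_i}, p_alpha> = #{f : parts of alpha -> rows | row sums = nu}. *)
Definition chi (mu alpha : seq nat) : int :=
  \sum_(s : 'S_(size mu))
    (-1) ^+ (odd_perm s) *
    (#|[set f : {ffun 'I_(size alpha) -> 'I_(size mu)} |
        [forall i : 'I_(size mu),
           ((\sum_(t : 'I_(size alpha) | f t == i) nth 0%N alpha t)%N%:Z
              == (nth 0%N mu i)%:Z - (i : nat)%:Z + (s i : nat)%:Z)]]|)%:Z.

(* A polynomial is a formal finite sum of terms (coefficient, exponent vector);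
   the exponent vector e : 'I_m -> nat, e k is the exponent of x_{k+1}. *)
Definition expo (m : nat) := {ffun 'I_m -> nat}.
Definition mpoly (m : nat) := seq (rat * expo m).

Definition mpoly_const m (a : rat) : mpoly m := [:: (a, [ffun => 0%N])].
Definition mpoly_var m (k : 'I_m) : mpoly m :=
  [:: (1, [ffun i => nat_of_bool (i == k)])].
Definition mpoly_add m (p q : mpoly m) : mpoly m := p ++ q.
Definition mpoly_scale m (a : rat) (p : mpoly m) : mpoly m :=
  [seq (a * t.1, t.2) | t : rat * expo m <- p].
Definition mpoly_mul m (p q : mpoly m) : mpoly m :=
  [seq (t.1 * u.1, [ffun i => (t.2 i + u.2 i)%N] : expo m) | t : rat * expo m <- p, u : rat * expo m <- q].
Definition mpoly_sum m (ps : seq (mpoly m)) : mpoly m := flatten ps.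
Definition mpoly_prod m (ps : seq (mpoly m)) : mpoly m :=
  foldr (@mpoly_mul m) (mpoly_const m 1) ps.
Definition mpoly_pow m (p : mpoly m) (n : nat) : mpoly m := mpoly_prod (nseq n p).

Definition mpoly_coef m (p : mpoly m) (e : expo m) : rat :=
  \sum_(t <- p | t.2 == e) t.1.

Definition falling_var m (k : 'I_m) (c : nat) : mpoly m :=
  mpoly_prod [seq mpoly_add (mpoly_var k) (mpoly_const m (- (i%:R))) | i <- iota 0 c].

Definition falling m (p : mpoly m) : mpoly m :=
  mpoly_sum [seq mpoly_scale t.1 (mpoly_prod [seq falling_var k (t.2 k) | k : 'I_m <- enum 'I_m])
            | t : rat * expo m <- p].

Definition occurs m (p : mpoly m) (j : nat) : Prop :=
  exists (e : expo m) (i : 'I_m), [/\ (i.+1 = j)%N, (0 < e i)%N & mpoly_coef p e != 0].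

(* cycle types of S_m: a k = a_{k+1}, with sum_k (k+1) a_{k+1} = m *)
Definition cycle_type m (a : {ffun 'I_m -> 'I_m.+1}) : bool :=
  (\sum_(k < m) k.+1 * a k)%N == m.

Definition ct_parts m (a : {ffun 'I_m -> 'I_m.+1}) : seq nat :=
  flatten [seq nseq (a k) k.+1 | k : 'I_m <- enum 'I_m].

Definition zee m (a : {ffun 'I_m -> 'I_m.+1}) : nat :=
  (\prod_(k < m) ((a k)`! * k.+1 ^ (a k)))%N.

Definition charpoly (mu : seq nat) : mpoly (sumn mu) :=
  falling
    (mpoly_sum
       [seq mpoly_scale ((chi mu (ct_parts a))%:~R / (zee a)%:R)
            (mpoly_prod [seq mpoly_pow
                               (mpoly_add (mpoly_scale (k.+1)%:R (mpoly_var k))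
                                          (mpoly_const (sumn mu) (-1)))
                               (a k)
                        | k : 'I_(sumn mu) <- enum 'I_(sumn mu)])
       | a : {ffun 'I_(sumn mu) -> 'I_(sumn mu).+1} <- enum (@cycle_type (sumn mu))]).

(* Main.v *)
Require Import Defs.
From mathcomp Require Import all_boot all_order all_algebra all_fingroup.
From mathcomp Require Import zify ring lra.
Set Implicit Arguments. Unset Strict Implicit. Unset Printing Implicit Defensive.
Import Order.TTheory GRing.Theory Num.Theory.
Open Scope ring_scope.

Lemma coef_cat m (p q : mpoly m) e :
  mpoly_coef (p ++ q) e = mpoly_coef p e + mpoly_coef q e.
Proof. by rewrite /mpoly_coef big_cat. Qed.

Lemma coef_flatten m (ps : seq (mpoly m)) e :
  mpoly_coef (flatten ps) e = \sum_(p <- ps) mpoly_coef p e.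
Proof.
elim: ps => [|p ps IH]; first by rewrite big_nil /mpoly_coef big_nil.
by rewrite /= coef_cat IH big_cons.
Qed.

Lemma coef_scale m a (p : mpoly m) e :
  mpoly_coef (mpoly_scale a p) e = a * mpoly_coef p e.
Proof. by rewrite /mpoly_coef /mpoly_scale big_map mulr_sumr. Qed.

Definition leE m (e B : expo m) := [forall i, (e i <= B i)%N].
Definition bnd m (p : mpoly m) (B : expo m) := all (fun t => leE t.2 B) p.
Definition addE m (e f : expo m) : expo m := [ffun i => (e i + f i)%N].
Definition zeroE m : expo m := [ffun => 0%N].

Lemma coef_out m (p : mpoly m) B e : bnd p B -> ~~ leE e B -> mpoly_coef p e = 0.
Proof.
move=> /allP hp he; rewrite /mpoly_coef big_seq_cond big1 // => t /andP[/hp ht /eqP te].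
by move: he; rewrite -te ht.
Qed.

Lemma addE_eq m (a b A B : expo m) : leE a A -> leE b B ->
  (addE a b == addE A B) = (a == A) && (b == B).
Proof.
move=> /forallP ha /forallP hb; apply/eqP/andP => [/ffunP h|[/eqP-> /eqP->]] //.
split; apply/eqP/ffunP => i; move: (h i) (ha i) (hb i); rewrite !ffunE; move: (a i) (b i) (A i) (B i) => x y z w; lia.
Qed.

Lemma leE_add m (a b A B : expo m) : leE a A -> leE b B -> leE (addE a b) (addE A B).
Proof.
move=> /forallP ha /forallP hb; apply/forallP => i; rewrite !ffunE.
by apply: leq_add.
Qed.

Lemma mul_cons m t (p q : mpoly m) : mpoly_mul (t :: p) q =
  [seq (t.1 * u.1, [ffun i => (t.2 i + u.2 i)%N] : expo m) | u : rat * expo m <- q] ++ mpoly_mul p q.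
Proof. by []. Qed.

Lemma bnd_mul m (p q : mpoly m) A B : bnd p A -> bnd q B ->
  bnd (mpoly_mul p q) (addE A B) /\
  mpoly_coef (mpoly_mul p q) (addE A B) = mpoly_coef p A * mpoly_coef q B.
Proof.
move=> hp hq; elim: p hp => [|t p IH] /=.
  by move=> _; split => //; rewrite /mpoly_coef !big_nil mul0r.
move=> /andP[ht hp]; have [IH1 IH2] := IH hp; split.
  rewrite mul_cons /bnd all_cat; apply/andP; split; last exact: IH1; apply/allP => x /mapP[u uq ->] /=.
  by apply: leE_add => //; move/allP: hq => /(_ u uq).
rewrite mul_cons coef_cat IH2 /mpoly_coef big_cons big_map /=.
have E : forall u, u \in q -> (([ffun i => (t.2 i + u.2 i)%N] : expo m) == addE A B)
          = (t.2 == A) && (u.2 == B).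
  move=> u uq; rewrite -addE_eq //; by move/allP: hq => /(_ u uq).
case: (t.2 =P A) => tA.
  rewrite mulrDl; congr (_ + _); rewrite mulr_sumr big_seq_cond [RHS]big_seq_cond.
  by apply: eq_bigl => u /=; case uq: (u \in q) => //=; rewrite E // tA eqxx.
rewrite big_seq_cond big1 ?add0r // => u /andP[uq]; rewrite E // => /andP[/eqP/tA].
by case: eqP.
Qed.

Lemma bnd_prod m (X : Type) (s : seq X) (P : X -> mpoly m) (B : X -> expo m) :
  (forall k, bnd (P k) (B k)) ->
  bnd (mpoly_prod (map P s)) (foldr (fun k acc => addE (B k) acc) (@zeroE m) s) /\
  mpoly_coef (mpoly_prod (map P s)) (foldr (fun k acc => addE (B k) acc) (@zeroE m) s)
    = \prod_(k <- s) mpoly_coef (P k) (B k).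
Proof.
move=> hB; elim: s => [|k s [IH1 IH2]] /=.
  split; first by rewrite /= andbT; apply/forallP => i.
  by rewrite big_nil /mpoly_coef big_cons big_nil eqxx addr0.
have [h1 h2] := bnd_mul (hB k) IH1; split => //.
by rewrite /mpoly_prod /= -/(mpoly_prod _) h2 IH2 big_cons.
Qed.

Lemma foldrE m (X : Type) (s : seq X) (B : X -> expo m) i :
  (foldr (fun k acc => addE (B k) acc) (@zeroE m) s) i = (\sum_(k <- s) B k i)%N.
Proof.
elim: s => [|k s IH] /=; first by rewrite big_nil ffunE.
by rewrite ffunE IH big_cons.
Qed.

Lemma pow_bnd m (p : mpoly m) B (c : rat) n : bnd p B -> mpoly_coef p B = c ->
  bnd (mpoly_pow p n) [ffun i => (n * B i)%N] /\
  mpoly_coef (mpoly_pow p n) [ffun i => (n * B i)%N] = c ^+ n.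
Proof.
move=> hb hc.
have E : mpoly_pow p n = mpoly_prod (map (fun _ : unit => p) (nseq n tt)).
  by rewrite map_nseq.
have F : foldr (fun k acc => addE ((fun _ : unit => B) k) acc) (@zeroE m) (nseq n tt)
   = [ffun i => (n * B i)%N].
  apply/ffunP => i; rewrite foldrE big_nseq ffunE.
  by elim: n {E} => //= n ->; rewrite mulSn.
rewrite E -F; have [h1 h2] := bnd_prod (nseq n tt) (fun _ => hb); split => //.
by rewrite h2 big_nseq hc iter_mulr_1.
Qed.

Lemma prod_enum_bnd m (P : 'I_m -> mpoly m) (c : 'I_m -> rat) (n : 'I_m -> nat) :
  (forall k, bnd (P k) [ffun i => (n k * (i == k))%N]) ->
  (forall k, mpoly_coef (P k) [ffun i => (n k * (i == k))%N] = c k) ->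
  bnd (mpoly_prod [seq P k | k <- enum 'I_m]) [ffun i => n i] /\
  mpoly_coef (mpoly_prod [seq P k | k <- enum 'I_m]) [ffun i => n i] = \prod_k c k.
Proof.
move=> hb hc.
have F : foldr (fun k acc => addE ((fun k => [ffun i => (n k * (i == k))%N]) k) acc)
   (@zeroE m) (enum 'I_m) = [ffun i => n i].
  apply/ffunP => i; rewrite foldrE ffunE big_enum /=.
  rewrite (bigD1 i) //= ffunE eqxx muln1 big1 ?addn0 // => j /negbTE ji.
  by rewrite ffunE eq_sym ji muln0.
rewrite -F; have [h1 h2] := bnd_prod (enum 'I_m) hb; split => //.
by rewrite h2 big_enum /=; apply: eq_bigr => k _; rewrite hc.
Qed.

Definition dlt m (k : 'I_m) : expo m := [ffun i => nat_of_bool (i == k)].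

Lemma two_bnd m (k : 'I_m) (a b : rat) :
  bnd [:: (a, dlt k); (b, [ffun => 0%N])] (dlt k) /\
  mpoly_coef [:: (a, dlt k); (b, [ffun => 0%N] : expo m)] (dlt k) = a.
Proof.
split.
  rewrite /bnd /= andbT; apply/andP; split; apply/forallP => i; rewrite ?ffunE //.
have ne : ([ffun => 0%N] : expo m) == dlt k = false.
  by apply/negbTE/eqP => /ffunP /(_ k); rewrite !ffunE eqxx.
by rewrite /mpoly_coef !big_cons big_nil ne eqxx addr0.
Qed.

Lemma dlt_mul m (k : 'I_m) n : [ffun i => (n * dlt k i)%N] = [ffun i => (n * (i == k))%N].
Proof. by apply/ffunP => i; rewrite !ffunE. Qed.

Lemma prod_dlt m (k : 'I_m) (X : Type) (s : seq X) (P : X -> mpoly m) (g : X -> rat) :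
  (forall x, bnd (P x) (dlt k)) -> (forall x, mpoly_coef (P x) (dlt k) = g x) ->
  bnd (mpoly_prod (map P s)) [ffun i => (size s * (i == k))%N] /\
  mpoly_coef (mpoly_prod (map P s)) [ffun i => (size s * (i == k))%N] = \prod_(x <- s) g x.
Proof.
move=> hb hc.
have F : foldr (fun x acc => addE ((fun _ => dlt k) x) acc) (@zeroE m) s
   = [ffun i => (size s * (i == k))%N].
  apply/ffunP => i; rewrite foldrE ffunE big_const_seq count_predT /dlt ffunE.
  by elim: (size s) => //= n ->; rewrite mulSn.
rewrite -F; have [h1 h2] := bnd_prod s hb; split => //.
by rewrite h2; apply: eq_bigr => x _; rewrite hc.
Qed.

Lemma fv_bnd m (k : 'I_m) c :
  bnd (falling_var k c) [ffun i => (c * (i == k))%N] /\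
  mpoly_coef (falling_var k c) [ffun i => (c * (i == k))%N] = 1.
Proof.
have := @prod_dlt m k _ (iota 0 c) (fun i => mpoly_add (mpoly_var k) (mpoly_const m (- (i%:R)))) (fun _ => 1).
rewrite size_iota big1 // => h; apply: h => x; by have [] := two_bnd k 1 (- (x%:R)).
Qed.

Definition FF m (e : expo m) : mpoly m :=
  mpoly_prod [seq falling_var k (e k) | k : 'I_m <- enum 'I_m].

Lemma FF_bnd m (e : expo m) : bnd (FF e) e /\ mpoly_coef (FF e) e = 1.
Proof.
have E : [ffun i => e i] = e by apply/ffunP => i; rewrite ffunE.
have [h1 h2] := @prod_enum_bnd m (fun k => falling_var k (e k)) (fun _ => 1) (fun k => e k)
  (fun k => (fv_bnd k (e k)).1) (fun k => (fv_bnd k (e k)).2).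
rewrite E in h1 h2; by rewrite /FF; split => //; rewrite h2 big1.
Qed.

Definition lin m (k : 'I_m) : mpoly m :=
  mpoly_add (mpoly_scale (k.+1)%:R (mpoly_var k)) (mpoly_const m (-1)).

Definition QQ m (a : {ffun 'I_m -> 'I_m.+1}) : mpoly m :=
  mpoly_prod [seq mpoly_pow (lin k) (a k) | k : 'I_m <- enum 'I_m].

Definition ex m (a : {ffun 'I_m -> 'I_m.+1}) : expo m := [ffun k => nat_of_ord (a k)].

Lemma QQ_bnd m (a : {ffun 'I_m -> 'I_m.+1}) :
  bnd (QQ a) (ex a) /\ mpoly_coef (QQ a) (ex a) = \prod_(k : 'I_m) (k.+1)%:R ^+ (a k).
Proof.
have H1 : forall k : 'I_m, bnd (mpoly_pow (lin k) (a k)) [ffun i => (a k * (i == k))%N].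
  move=> k; rewrite -dlt_mul; have [h h'] := two_bnd k ((k.+1)%:R * 1) (-1).
  exact: (pow_bnd _ h h').1.
have H2 : forall k : 'I_m, mpoly_coef (mpoly_pow (lin k) (a k)) [ffun i => (a k * (i == k))%N]
    = (k.+1)%:R ^+ (a k).
  move=> k; rewrite -dlt_mul; have [h h'] := two_bnd k ((k.+1)%:R * 1) (-1).
  by rewrite (pow_bnd _ h h').2 mulr1.
exact: (@prod_enum_bnd m (fun k => mpoly_pow (lin k) (a k)) (fun k => (k.+1)%:R ^+ (a k))
   (fun k => a k) H1 H2).
Qed.

Lemma coef_falling m (P : mpoly m) e :
  mpoly_coef (falling P) e = \sum_(t <- P) t.1 * mpoly_coef (FF t.2) e.
Proof. by rewrite /falling /mpoly_sum coef_flatten big_map; apply: eq_bigr => t _; rewrite coef_scale. Qed.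

Lemma ct_incomp m (a a' : {ffun 'I_m -> 'I_m.+1}) :
  cycle_type a -> cycle_type a' -> leE (ex a) (ex a') -> a = a'.
Proof.
move=> /eqP ha /eqP ha' /forallP hle.
have hle' : forall k : 'I_m, (k.+1 * a k <= k.+1 * a' k)%N.
  by move=> k; rewrite leq_mul2l; have := hle k; rewrite !ffunE => ->; rewrite orbT.
have : (\sum_(k < m) (k.+1 * a' k - k.+1 * a k) == 0)%N.
  by rewrite sumnB ?ha ?ha' ?subnn // => k _; exact: hle' k.
rewrite sum_nat_eq0 => /forallP H; apply/ffunP => k; apply/val_inj.
have := H k; have := hle' k; rewrite /= subn_eq0 => h1 h2.
have : (k.+1 * a k == k.+1 * a' k)%N by rewrite eqn_leq h1 h2.
by rewrite eqn_mul2l /= => /eqP.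
Qed.

Definition PP m (w : {ffun 'I_m -> 'I_m.+1} -> rat) : mpoly m :=
  mpoly_sum [seq mpoly_scale (w a) (QQ a) | a <- enum (@cycle_type m)].

Lemma leE_trans m (a b c : expo m) : leE a b -> leE b c -> leE a c.
Proof. move=> /forallP h1 /forallP h2; apply/forallP => i; exact: leq_trans (h1 i) (h2 i). Qed.

Lemma leE_anti m (a b : expo m) : leE a b -> leE b a -> a = b.
Proof.
move=> /forallP h1 /forallP h2; apply/ffunP => i; apply/eqP; by rewrite eqn_leq h1 h2.
Qed.

Lemma ex_inj m : injective (@ex m).
Proof.
move=> a b /ffunP h; apply/ffunP => k; apply/val_inj; have := h k; by rewrite !ffunE.
Qed.

Lemma coef_main m (w : {ffun 'I_m -> 'I_m.+1} -> rat) (a0 : {ffun 'I_m -> 'I_m.+1}) :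
  cycle_type a0 ->
  mpoly_coef (falling (PP w)) (ex a0) = w a0 * \prod_(k : 'I_m) (k.+1)%:R ^+ (a0 k).
Proof.
move=> ct0; rewrite coef_falling.
have Hmem : forall t, t \in PP w -> exists2 a, cycle_type a & leE t.2 (ex a).
  move=> t /flattenP[x /mapP[a]]; rewrite mem_enum => cta -> /mapP[u uQ ->] /=.
  by exists a => //; have [/allP h _] := QQ_bnd a; exact: h.
rewrite (eq_big_seq (fun t => if t.2 == ex a0 then t.1 else 0)); last first.
  move=> t tP; case: eqP => [->|ne]; first by rewrite (FF_bnd _).2 mulr1.
  rewrite (coef_out (FF_bnd t.2).1) ?mulr0 //; apply/negP => le.
  have [a cta lea] := Hmem t tP; apply: ne; have ea : a0 = a.
    by apply: ct_incomp => //; exact: leE_trans le lea.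
  by apply: leE_anti => //; rewrite ea.
rewrite -big_mkcond /= -/(mpoly_coef _ _) /PP /mpoly_sum coef_flatten big_map.
rewrite (bigD1_seq a0) ?enum_uniq ?mem_enum //= coef_scale (QQ_bnd a0).2.
rewrite [X in _ + X]big1_seq ?addr0 // => a /andP[ne]; rewrite mem_enum => cta.
rewrite coef_scale (coef_out (QQ_bnd a).1) ?mulr0 //; apply/negP => le.
by move: ne; rewrite (ct_incomp ct0 cta le) eqxx.
Qed.

Definition vbt m h (t : rat * expo m) :=
  (t.1 == 0) || [forall i : 'I_m, (h <= i)%N ==> (t.2 i == 0%N)].
Definition vb m h (p : mpoly m) := all (@vbt m h) p.

Lemma vb_cat m h (p q : mpoly m) : vb h p -> vb h q -> vb h (p ++ q).
Proof. by rewrite /vb all_cat => -> ->. Qed.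

Lemma vb_flatten m h (ps : seq (mpoly m)) : all (@vb m h) ps -> vb h (flatten ps).
Proof. elim: ps => //= p ps IH /andP[h1 h2]; exact: vb_cat h1 (IH h2). Qed.

Lemma vb_scale m h a (p : mpoly m) : vb h p -> vb h (mpoly_scale a p).
Proof.
move=> /allP hp; apply/allP => x /mapP[t tp ->]; move: (hp t tp); rewrite /vbt /=.
by case/orP => [/eqP->|->]; rewrite ?mulr0 ?eqxx ?orbT.
Qed.

Lemma vb_zero m h a (p : mpoly m) : a = 0 -> vb h (mpoly_scale a p).
Proof. by move=> ->; apply/allP => x /mapP[t _ ->]; rewrite /vbt /= mul0r eqxx. Qed.

Lemma vb_mul m h (p q : mpoly m) : vb h p -> vb h q -> vb h (mpoly_mul p q).
Proof.
move=> hp hq; elim: p hp => //= t p IH /andP[ht hp]; rewrite mul_cons.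
apply: vb_cat (IH hp); apply/allP => x /mapP[u uq ->]; move/allP: hq => /(_ u uq).
move: ht; rewrite /vbt /= mulf_eq0.
case/orP => [->//|/forallP h1]; case/orP => [->|/forallP h2]; rewrite ?orbT //.
apply/orP; right; apply/forallP => i; apply/implyP => hi; rewrite ffunE.
by have := implyP (h1 i) hi; have := implyP (h2 i) hi; move=> /eqP-> /eqP->.
Qed.

Lemma vb_prod m h (ps : seq (mpoly m)) : all (@vb m h) ps -> vb h (mpoly_prod ps).
Proof.
elim: ps => [|p ps IH] /=.
  by move=> _; rewrite /vb /= andbT /vbt; apply/orP; right; apply/forallP => i; rewrite ffunE implybT.
by move=> /andP[h1 h2]; exact: vb_mul h1 (IH h2).
Qed.

Lemma vb_pow m h (p : mpoly m) n : vb h p -> vb h (mpoly_pow p n).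
Proof. by move=> hp; apply: vb_prod; apply/allP => x /nseqP[->]. Qed.

Lemma vb_two m h (k : 'I_m) a b : (k < h)%N ->
  vb h [:: (a, dlt k); (b, [ffun => 0%N] : expo m)].
Proof.
move=> kh; rewrite /vb /= /vbt /= andbT; apply/andP; split; apply/orP; right;
  apply/forallP => i; apply/implyP => hi; rewrite ffunE //.
move: kh; case: (i =P k) => [<-|_] /=; by rewrite ?ltnNge ?hi.
Qed.

Lemma vb_FF m h (e : expo m) : (forall i : 'I_m, (h <= i)%N -> e i = 0%N) -> vb h (FF e).
Proof.
move=> he; apply: vb_prod; apply/allP => x /mapP[k _ ->].
case: (ltnP k h) => kh.
  by apply: vb_prod; apply/allP => y /mapP[i _ ->]; apply: vb_two.
by rewrite he //; apply: vb_prod.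
Qed.

Lemma vb_falling m h (p : mpoly m) : vb h p -> vb h (falling p).
Proof.
move=> /allP hp; apply: vb_flatten; apply/allP => x /mapP[t tp ->].
have := hp t tp; rewrite /vbt; case/orP => [/eqP t0|/forallP ht]; first exact: vb_zero.
apply: vb_scale; apply: vb_FF => i hi; exact/eqP/(implyP (ht i) hi).
Qed.

Lemma vb_PP m h (w : {ffun 'I_m -> 'I_m.+1} -> rat) :
  (forall a, cycle_type a -> forall k : 'I_m, (h <= k)%N -> (0 < a k)%N -> w a = 0) ->
  vb h (PP w).
Proof.
move=> hw; apply: vb_flatten; apply/allP => x /mapP[a]; rewrite mem_enum => cta ->.
case: (boolP [exists k : 'I_m, (h <= k)%N && (0 < a k)%N]).
  by case/existsP => k /andP[k1 k2]; apply: vb_zero; exact: hw cta k k1 k2.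
rewrite negb_exists => /forallP na; apply: vb_scale; apply: vb_prod.
apply/allP => y /mapP[k _ ->]; case: (ltnP k h) => kh.
  by apply: vb_pow; apply: vb_two.
have := na k; rewrite kh /= lt0n negbK => /eqP ->; exact: vb_prod.
Qed.

Lemma coef_nz m (p : mpoly m) e : mpoly_coef p e != 0 ->
  exists2 t, t \in p & (t.2 = e) /\ (t.1 != 0).
Proof.
move=> hc; case: (boolP (has (fun t : rat * expo m => (t.2 == e) && (t.1 != 0)) p)).
  by case/hasP => t tp /andP[/eqP te tn]; exists t.
move/hasPn => H; move: hc; rewrite /mpoly_coef big_seq_cond big1 ?eqxx // => t /andP[tp te].
by have := H t tp; rewrite te /= negbK => /eqP.
Qed.
Close Scope ring_scope.

Definition isp (mu : seq nat) := sorted geq mu && all (fun x => 0 < x) mu.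

Definition bb (mu : seq nat) (i : nat) : nat := nth 0 mu i + (size mu).-1 - i.
Definition big (mu : seq nat) (i : nat) : bool := size mu <= bb mu i.
Definition SS mu := [seq bb mu i | i <- iota 0 (size mu) & ~~ big mu i].
Definition GG mu := [seq x <- iota 0 (size mu) | x \notin SS mu].
Definition rk mu i := count (big mu) (iota 0 i).
Definition ws mu i := if big mu i then nth 0 (GG mu) (rk mu i) else bb mu i.
Definition cs mu i := bb mu i - ws mu i.

Lemma mu_le mu i j : isp mu -> i <= j -> nth 0 mu j <= nth 0 mu i.
Proof.
move=> /andP[so _] ij.
case: (ltnP j (size mu)) => hj; last by rewrite nth_default.
have tr : transitive geq by move=> a b c h1 h2; exact: leq_trans h2 h1.
have := sorted_leq_nth tr (fun x => leqnn x) 0 so; apply => //; rewrite inE //.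
exact: leq_ltn_trans ij hj.
Qed.

Lemma mu_pos mu i : isp mu -> i < size mu -> 0 < nth 0 mu i.
Proof. by move=> /andP[_ /allP h] hi; apply: h; rewrite mem_nth. Qed.

Lemma bb_dec mu i j : isp mu -> i < j -> j < size mu -> bb mu j < bb mu i.
Proof.
move=> hm ij js; have := mu_le hm (ltnW ij); rewrite /bb; lia.
Qed.

Lemma bb_inj mu i j : isp mu -> i < size mu -> j < size mu -> bb mu i = bb mu j -> i = j.
Proof.
move=> hm hi hj e; case: (ltngtP i j) => // h.
  by have := bb_dec hm h hj; rewrite e ltnn.
by have := bb_dec hm h hi; rewrite e ltnn.
Qed.

Lemma big0 mu : isp mu -> 0 < size mu -> big mu 0.
Proof. move=> hm h; have := mu_pos hm h; rewrite /big /bb; lia. Qed.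

Lemma SS_uniq mu : isp mu -> uniq (SS mu).
Proof.
move=> hm; rewrite /SS map_inj_in_uniq ?filter_uniq ?iota_uniq //.
move=> i j; rewrite !mem_filter !mem_iota /= => /andP[_ hi] /andP[_ hj].
exact: bb_inj.
Qed.

Lemma SS_lt mu x : x \in SS mu -> x < size mu.
Proof. by case/mapP => i; rewrite mem_filter /big => /andP[h _] ->; rewrite ltnNge. Qed.

Lemma size_GG mu : isp mu -> size (GG mu) = count (big mu) (iota 0 (size mu)).
Proof.
move=> hm.
have h1 : count (mem (SS mu)) (iota 0 (size mu)) = size (SS mu).
  rewrite -size_filter; apply: perm_size; apply: uniq_perm.
  - by rewrite filter_uniq ?iota_uniq.
  - exact: SS_uniq.
  move=> x; rewrite mem_filter mem_iota /= add0n; case xS: (x \in SS mu) => //=.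
  exact: SS_lt.
have h2 := count_predC (mem (SS mu)) (iota 0 (size mu)).
have h3 := count_predC (big mu) (iota 0 (size mu)).
have h4 : size (SS mu) = count (predC (big mu)) (iota 0 (size mu)).
  by rewrite /SS size_map size_filter.
rewrite /GG size_filter; move: h2 h3; rewrite size_iota h1 h4.
have -> : count (predC (mem (SS mu))) (iota 0 (size mu)) = count (fun x => x \notin SS mu) (iota 0 (size mu)) by [].
lia.
Qed.

Lemma GG_sorted mu : sorted ltn (GG mu).
Proof. by apply: sorted_filter; [exact: ltn_trans | exact: iota_ltn_sorted]. Qed.

Lemma GG_mem mu x : x \in GG mu -> (x < size mu) && (x \notin SS mu).
Proof. by rewrite mem_filter mem_iota add0n andbC. Qed.

Lemma rk_split mu q t : q <= t -> rk mu t = rk mu q + count (big mu) (iota q (t - q)).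
Proof. by move=> qt; rewrite /rk -count_cat -iotaD subnKC. Qed.

Lemma rk_lt mu i : isp mu -> i < size mu -> big mu i -> rk mu i < size (GG mu).
Proof.
move=> hm hi bi; rewrite size_GG // -/(rk mu (size mu)) (rk_split mu (ltnW hi)).
have -> : size mu - i = (size mu - i).-1.+1 by lia.
by rewrite /= bi; lia.
Qed.

Lemma rk_mono mu q t : q < t -> big mu q -> rk mu q < rk mu t.
Proof.
move=> qt bq; rewrite (rk_split mu (ltnW qt)).
have -> : t - q = (t - q).-1.+1 by lia.
by rewrite /= bq; lia.
Qed.

Lemma rk_le mu q t : q <= t -> rk mu q <= rk mu t.
Proof. by move=> qt; rewrite (rk_split mu qt) leq_addr. Qed.

Lemma ws_lt mu i : isp mu -> i < size mu -> ws mu i < size mu.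
Proof.
move=> hm hi; rewrite /ws; case: ifP => bi; last by move: bi; rewrite /big ltnNge => ->.
have := rk_lt hm hi bi => hr.
by have /GG_mem/andP[] := mem_nth 0 hr.
Qed.

Lemma ws_le mu i : isp mu -> i < size mu -> ws mu i <= bb mu i.
Proof.
move=> hm hi; rewrite /ws; case: ifP => bi //.
by have := ws_lt hm hi; rewrite /ws bi => h; apply: ltnW; exact: leq_trans h bi.
Qed.

Lemma ws_mono mu q t : isp mu -> q < size mu -> t < size mu -> big mu q -> big mu t ->
  (ws mu q < ws mu t) = (q < t).
Proof.
move=> hm hq ht bq bt; rewrite /ws bq bt.
have so := GG_sorted mu.
have H : forall a b, a < b -> big mu a -> b < size mu -> big mu b ->
    nth 0 (GG mu) (rk mu a) < nth 0 (GG mu) (rk mu b).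
  move=> a b ab ba hb bb'; apply: (sorted_ltn_nth ltn_trans 0 so); rewrite ?inE.
  - exact: rk_lt hm (ltn_trans ab hb) ba.
  - exact: rk_lt hm hb bb'.
  exact: rk_mono.
case: (ltngtP q t) => h.
- exact: H.
- by apply/negbTE; rewrite -leqNgt; apply: ltnW; apply: H.
- by rewrite h ltnn.
Qed.

Lemma ws_inj mu i j : isp mu -> i < size mu -> j < size mu -> ws mu i = ws mu j -> i = j.
Proof.
move=> hm hi hj e.
case bi: (big mu i); case bj: (big mu j).
- case: (ltngtP i j) => // h.
    by have := ws_mono hm hi hj bi bj; rewrite h e ltnn.
  by have := ws_mono hm hj hi bj bi; rewrite h e ltnn.
- have hr := rk_lt hm hi bi; have /GG_mem/andP[_ nS] := mem_nth 0 hr.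
  move: e nS; rewrite /ws bi bj => ->; case/negP; apply/mapP; exists j => //.
  by rewrite mem_filter mem_iota bj.
- have hr := rk_lt hm hj bj; have /GG_mem/andP[_ nS] := mem_nth 0 hr.
  move: e nS; rewrite /ws bi bj => <-; case/negP; apply/mapP; exists i => //.
  by rewrite mem_filter mem_iota bi.
- by move: e; rewrite /ws bi bj; apply: bb_inj.
Qed.

Lemma ws0 mu : isp mu -> 0 < size mu -> ws mu 0 = 0.
Proof.
move=> hm hs; rewrite /ws big0 // /rk /= /GG.
have -> : size mu = (size mu).-1.+1 by lia.
rewrite /=; case: ifP => // /negbFE /mapP[i]; rewrite mem_filter mem_iota => /andP[_ hi].
have := mu_pos hm (i:=i); rewrite /bb; lia.
Qed.

Lemma cs_inj mu q t : isp mu -> q < size mu -> t < size mu -> big mu q -> big mu t ->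
  cs mu q = cs mu t -> q = t.
Proof.
move=> hm hq ht bq bt e.
have key : forall a b, a < b -> a < size mu -> b < size mu -> big mu a -> big mu b ->
    cs mu b < cs mu a.
  move=> a b ab ha hb ba bb'; have h1 := bb_dec hm ab hb.
  have h2 : ws mu a < ws mu b by rewrite ws_mono.
  have h3 := ws_le hm ha; have h4 := ws_le hm hb; rewrite /cs; lia.
case: (ltngtP q t) => // h.
  by have := key _ _ h hq ht bq bt; rewrite e ltnn.
by have := key _ _ h ht hq bt bq; rewrite e ltnn.
Qed.

Lemma cs_pos mu t : isp mu -> t < size mu -> big mu t -> 0 < cs mu t.
Proof. move=> hm ht bt; have := ws_lt hm ht; move: bt; rewrite /cs /ws /big => bt; lia. Qed.

Lemma cs_small mu t : ~~ big mu t -> cs mu t = 0.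
Proof. by move=> /negbTE bt; rewrite /cs /ws bt subnn. Qed.

Lemma bb_le0 mu t : isp mu -> bb mu t <= bb mu 0.
Proof. move=> hm; have := mu_le hm (leq0n t); rewrite /bb; lia. Qed.

Lemma sumn_ge mu : isp mu -> bb mu 0 <= sumn mu.
Proof.
case: mu => [|x s] //= /andP[_ /andP[x0 /allP hs]]; rewrite /bb /= subn0.
suff : size s <= sumn s by lia.
elim: s hs {x0} => //= y s IH hs; have := hs y (mem_head _ _).
have := IH (fun z zs => hs z (mem_behead (s:=y::s) zs)); lia.
Qed.

Definition CC mu := [seq cs mu i | i <- iota 0 (size mu) & big mu i].

Lemma CC_uniq mu : isp mu -> uniq (CC mu).
Proof.
move=> hm; rewrite /CC map_inj_in_uniq ?filter_uniq ?iota_uniq //.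
move=> i j; rewrite !mem_filter !mem_iota /= => /andP[bi hi] /andP[bj hj].
exact: cs_inj.
Qed.

Lemma CC_mem mu x : isp mu -> x \in CC mu -> (0 < x) && (x <= sumn mu).
Proof.
move=> hm /mapP[i]; rewrite mem_filter mem_iota /= => /andP[bi hi] ->.
rewrite cs_pos //=; apply: leq_trans (sumn_ge hm); apply: leq_trans (bb_le0 i hm).
by rewrite /cs leq_subr.
Qed.

Lemma ct_parts_eq m (a : {ffun 'I_m -> 'I_m.+1}) (P : pred 'I_m) :
  (forall k, (a k : nat) = P k) -> ct_parts a = [seq (val k).+1 | k <- enum 'I_m & P k].
Proof.
move=> h; rewrite /ct_parts; elim: (enum 'I_m) => //= k s IH.
by rewrite IH h; case: (P k).
Qed.

Definition a0 mu : {ffun 'I_(sumn mu) -> 'I_(sumn mu).+1} :=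
  [ffun k => inord (nat_of_bool ((val k).+1 \in CC mu))].

Definition al0 mu := ct_parts (a0 mu).

Lemma al0E mu : 0 < sumn mu ->
  al0 mu = [seq (val k).+1 | k <- enum 'I_(sumn mu) & (val k).+1 \in CC mu].
Proof.
move=> hm; apply: ct_parts_eq => k; rewrite ffunE inordK //.
by case: (_ \in _) => //=; rewrite ltnS.
Qed.

Lemma al0_uniq mu : 0 < sumn mu -> uniq (al0 mu).
Proof.
move=> hm; rewrite al0E // map_inj_in_uniq; last by move=> i j _ _ [] /val_inj.
by apply: filter_uniq; apply: enum_uniq.
Qed.

Lemma al0_mem mu x : isp mu -> 0 < sumn mu -> (x \in al0 mu) = (x \in CC mu).
Proof.
move=> hm hs; rewrite al0E //; apply/idP/idP.
  by case/mapP => k; rewrite mem_filter => /andP[h _] ->.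
move=> xC; have /andP[x0 xm] := CC_mem hm xC; apply/mapP.
have hk : x.-1 < sumn mu by lia.
exists (Ordinal hk); rewrite ?mem_filter ?mem_enum /=; last by lia.
have -> : x.-1.+1 = x by lia.
by rewrite xC -enumT mem_enum.
Qed.

Section Ring.
Local Open Scope ring_scope.

Definition csum (mu alpha : seq nat) (f : {ffun 'I_(size alpha) -> 'I_(size mu)}) (i : 'I_(size mu)) : nat :=
  (\sum_(t : 'I_(size alpha) | f t == i) nth 0%N alpha t)%N.

Definition valid (mu alpha : seq nat) (s : 'S_(size mu)) (f : {ffun 'I_(size alpha) -> 'I_(size mu)}) : bool :=
  [forall i : 'I_(size mu),
     ((\sum_(t : 'I_(size alpha) | f t == i) nth 0%N alpha t)%N%:Z
        == (nth 0%N mu i)%:Z - (i : nat)%:Z + (s i : nat)%:Z)].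

Lemma chiE mu alpha : chi mu alpha =
  \sum_(s : 'S_(size mu)) (-1) ^+ (odd_perm s) * (#|[set f : {ffun 'I_(size alpha) -> 'I_(size mu)} | valid s f]|)%:Z.
Proof. by []. Qed.

Lemma valid_c mu alpha (s : 'S_(size mu)) (f : {ffun 'I_(size alpha) -> 'I_(size mu)}) : valid s f ->
  forall i, (csum f i + ((size mu).-1 - s i) = bb mu i)%N.
Proof.
move=> /forallP H i; have := H i; rewrite /csum /bb => /eqP.
have := ltn_ord i; have := ltn_ord (s i).
move: (\sum_(t | f t == i) nth 0%N alpha t)%N (nth 0%N mu i) (i : nat) (s i : nat) => a b c d.
lia.
Qed.

Lemma c_ge mu alpha (f : {ffun 'I_(size alpha) -> 'I_(size mu)}) (u : 'I_(size alpha)) :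
  (nth 0%N alpha u <= csum f (f u))%N.
Proof. by rewrite /csum (bigD1 u) //= leq_addr. Qed.

Lemma chi_zero mu alpha x : isp mu -> x \in alpha -> (bb mu 0 < x)%N -> chi mu alpha = 0.
Proof.
move=> hm xa hx; rewrite chiE big1 // => s _.
have -> : [set f : {ffun 'I_(size alpha) -> 'I_(size mu)} | valid s f] = set0; last by rewrite cards0 mulr0.
apply/setP => f; rewrite inE in_set0; apply/negP => V.
have hu : (index x alpha < size alpha)%N by rewrite index_mem.
have := c_ge f (Ordinal hu); rewrite /= nth_index // => h1.
have := valid_c V (f (Ordinal hu)); have := bb_le0 (f (Ordinal hu)) hm; move: h1 hx; clear xa; move: (csum f _) (bb mu (f _)) (bb mu 0) ((size mu).-1 - _)%N => A B C D; lia.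
Qed.

End Ring.

Lemma card_count l (P : pred nat) : #|[set i : 'I_l | P i]| = count P (iota 0 l).
Proof.
rewrite -sum1_count -sum1_card.
have -> : iota 0 l = index_iota 0 l by rewrite /index_iota subn0.
rewrite big_mkord; apply: eq_bigl => i; by rewrite inE.
Qed.

Lemma sub_lt l (i : 'I_l) x : l.-1 - x < l.
Proof. have := ltn_ord i; lia. Qed.

Definition wsf mu (i : 'I_(size mu)) : 'I_(size mu) := Ordinal (sub_lt i (ws mu i)).

Lemma wsf_inj mu : isp mu -> injective (@wsf mu).
Proof.
move=> hm i j /(congr1 val) /= e; apply/val_inj; apply: (ws_inj hm (ltn_ord i) (ltn_ord j)).
have := ws_lt hm (ltn_ord i); have := ws_lt hm (ltn_ord j); move: e.
move: (ws mu i) (ws mu j) => a b; lia.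
Qed.

Definition sstar mu (hm : isp mu) : 'S_(size mu) := perm (wsf_inj hm).

Lemma sstarE mu (hm : isp mu) i : (sstar hm i : nat) = (size mu).-1 - ws mu i.
Proof. by rewrite permE. Qed.

Lemma cs_ws mu i : isp mu -> i < size mu -> cs mu i + ws mu i = bb mu i.
Proof. by move=> hm hi; rewrite /cs subnK // ws_le. Qed.

Lemma cs_in_al0 mu (t : nat) : isp mu -> 0 < sumn mu -> t < size mu -> big mu t ->
  cs mu t \in al0 mu.
Proof.
move=> hm hs ht bt; rewrite al0_mem //; apply/mapP; exists t => //.
by rewrite mem_filter mem_iota bt.
Qed.

Lemma valid_uniq mu (hm : isp mu) (hs : 0 < sumn mu) (s : 'S_(size mu))
    (f : {ffun 'I_(size (al0 mu)) -> 'I_(size mu)}) :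
  valid s f -> s = sstar hm.
Proof.
move=> Hv; have V := valid_c Hv.
have winj : forall i j, (size mu).-1 - s i = (size mu).-1 - s j -> i = j.
  move=> i j e; apply: (perm_inj (s := s)); apply: ord_inj.
  have := ltn_ord (s i); have := ltn_ord (s j); move: e.
  move: (s i : nat) (s j : nat) => a b; lia.
have U1 : forall i : 'I_(size mu), big mu i -> exists u, f u = i.
  move=> i bi; case: (pickP (fun u => f u == i)) => [u /eqP fu|none]; first by exists u.
  have c0 : csum f i = 0 by rewrite /csum big_pred0.
  have := V i; rewrite c0; move: bi; rewrite /big.
  have := sub_lt i (s i); move: (bb mu i) ((size mu).-1 - s i) => a c h1 h2 h3; exfalso; lia.
have Hn : size (al0 mu) <= #|[set i : 'I_(size mu) | big mu i]|.
  rewrite card_count; apply: leq_trans (uniq_leq_size (al0_uniq hs) (s2 := CC mu) _) _.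
    by move=> x; rewrite al0_mem.
  by rewrite /CC size_map size_filter.
have HIm : [set i : 'I_(size mu) | big mu i] \subset [set f u | u in 'I_(size (al0 mu))].
  apply/subsetP => i; rewrite inE => /U1[u <-]; exact: imset_f.
have cIm := leq_imset_card f 'I_(size (al0 mu)); rewrite card_ord in cIm.
have cB := subset_leq_card HIm.
have finj : injective f.
  have : {in 'I_(size (al0 mu)) &, injective f}.
    apply/imset_injP; rewrite eqn_leq leq_imset_card /=.
    apply: leq_trans _ cB; apply: leq_trans _ Hn; by rewrite card_ord.
  by move=> h x y; apply: h.
have EIm : [set i : 'I_(size mu) | big mu i] = [set f u | u in 'I_(size (al0 mu))].
  apply/eqP; rewrite eqEcard HIm /=; exact: leq_trans cIm Hn.
have bigf : forall u, big mu (f u).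
  move=> u; have : f u \in [set i : 'I_(size mu) | big mu i] by rewrite EIm imset_f.
  by rewrite inE.
have U3 : forall u, csum f (f u) = nth 0 (al0 mu) u.
  move=> u; rewrite /csum (big_pred1 u) // => t /=.
  by apply/eqP/eqP => [/finj|->].
have Ismall : forall i : 'I_(size mu), ~~ big mu i -> csum f i = 0.
  move=> i bi; rewrite /csum big_pred0 // => t; apply/negP => /eqP fi.
  by move: bi; rewrite -fi bigf.
have key : forall N (t : 'I_(size mu)), t < N -> big mu t -> csum f t = cs mu t.
  elim => // N IH t tN bt.
  have ca := cs_in_al0 hm hs (ltn_ord t) bt.
  have hu : index (cs mu t) (al0 mu) < size (al0 mu) by rewrite index_mem.
  set u := Ordinal hu; set r := f u.
  have cr : csum f r = cs mu t by rewrite /r U3 /= nth_index.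
  have br : big mu r := bigf u.
  case: (ltngtP r t) => [rt|tr|rt].
  - have := IH r (leq_trans rt tN) br; rewrite cr => e.
    have := cs_inj hm (ltn_ord t) (ltn_ord r) bt br e => e'.
    by move: rt; rewrite e' ltnn.
  - exfalso.
    have Vr := V r; rewrite cr in Vr.
    have hbb := bb_dec hm tr (ltn_ord r).
    have cwt := cs_ws hm (ltn_ord t).
    pose v : 'I_(size mu) := Ordinal (sub_lt r ((size mu).-1 - s r)).
    pose q := ((sstar hm)^-1)%g v.
    have sq : sstar hm q = v by rewrite /q permKV.
    have wq : ws mu q = (size mu).-1 - s r.
      have := congr1 (@nat_of_ord _) sq; rewrite sstarE /=.
      have := ws_lt hm (ltn_ord q); have := sub_lt r (s r).
      move: (ws mu q) ((size mu).-1 - s r) => a b; lia.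
    case bq: (big mu q).
    + have qt : q < t.
        rewrite -(ws_mono hm (ltn_ord q) (ltn_ord t) bq bt) wq.
        move: Vr hbb cwt; move: ((size mu).-1 - s r) (bb mu r) (bb mu t) (cs mu t) (ws mu t) => a b c d e.
        lia.
      have := IH q (leq_trans qt tN) bq => cq.
      have Vq := V q; rewrite cq in Vq.
      have cwq := cs_ws hm (ltn_ord q).
      have e : (size mu).-1 - s q = (size mu).-1 - s r.
        move: Vq cwq wq; move: ((size mu).-1 - s q) (cs mu q) (bb mu q) (ws mu q) => a b c d.
        lia.
      have := winj _ _ e => qr; move: qt tr; rewrite qr => h1 h2.
      by have := ltn_trans h1 h2; rewrite ltnn.
    + have Vq := V q; rewrite Ismall ?bq // add0n in Vq.
      have e : (size mu).-1 - s q = (size mu).-1 - s r.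
        by rewrite Vq -wq /ws bq.
      by have := winj _ _ e => qr; move: bq; rewrite qr br.
  - have tr : t = r by apply: val_inj; rewrite /= rt.
    by rewrite {1}tr cr.
have cE : forall i : 'I_(size mu), csum f i = cs mu i.
  move=> i; case bi: (big mu i); first exact: key i.+1 i (ltnSn _) bi.
  by rewrite Ismall ?bi // cs_small ?bi.
apply/permP => i; apply: ord_inj; rewrite sstarE.
have := V i; rewrite cE; have := cs_ws hm (ltn_ord i); have := ltn_ord (s i).
have := ws_lt hm (ltn_ord i).
move: (cs mu i) (bb mu i) (ws mu i) (s i : nat) => a b c d; lia.
Qed.

Definition fstar mu (hl : 0 < size mu) : {ffun 'I_(size (al0 mu)) -> 'I_(size mu)} :=
  [ffun u : 'I_(size (al0 mu)) => odflt (Ordinal hl)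
     [pick i : 'I_(size mu) | big mu i && (cs mu i == nth 0 (al0 mu) u)]].

Lemma fstarP mu (hm : isp mu) (hs : 0 < sumn mu) (hl : 0 < size mu) u :
  big mu (fstar hl u) /\ cs mu (fstar hl u) = nth 0 (al0 mu) u.
Proof.
rewrite /fstar ffunE; case: pickP => [i /andP[bi /eqP ci]|none] //=.
have : nth 0 (al0 mu) u \in CC mu by rewrite -al0_mem // mem_nth.
case/mapP => j; rewrite mem_filter mem_iota /= => /andP[bj hj] e.
by have := none (Ordinal hj); rewrite /= bj e eqxx.
Qed.

Lemma csum_fstar mu (hm : isp mu) (hs : 0 < sumn mu) (hl : 0 < size mu) i :
  csum (fstar hl) i = cs mu i.
Proof.
case bi: (big mu i); last first.
  rewrite cs_small ?bi // /csum big_pred0 // => t; apply/negP => /eqP e.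
  by have [] := fstarP hm hs hl t; rewrite e bi.
have ca := cs_in_al0 hm hs (ltn_ord i) bi.
have hu : index (cs mu i) (al0 mu) < size (al0 mu) by rewrite index_mem.
rewrite /csum (big_pred1 (Ordinal hu)) /= ?nth_index // => t /=.
have [bt ct] := fstarP hm hs hl t.
apply/eqP/eqP => [e|e].
  apply/val_inj => /=; apply/eqP; rewrite -(nth_uniq 0 (ltn_ord t) hu (al0_uniq hs)).
  by rewrite nth_index // -ct e.
apply/val_inj; apply: (cs_inj hm (ltn_ord _) (ltn_ord _) bt bi).
by rewrite ct e /= nth_index.
Qed.

Lemma fstar_valid mu (hm : isp mu) (hs : 0 < sumn mu) (hl : 0 < size mu) :
  valid (sstar hm) (fstar hl).
Proof.
apply/forallP => i; rewrite -/(csum _ _) csum_fstar // sstarE.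
have := cs_ws hm (ltn_ord i); have := ws_lt hm (ltn_ord i); have := ltn_ord i.
rewrite /bb; move: (cs mu i) (ws mu i) (nth 0 mu i) (i : nat) => a b c d.
move=> h1 h2 h3; apply/eqP; lia.
Qed.

Lemma sum_nth (s : seq nat) : (\sum_(i < size s) nth 0 s i)%N = sumn s.
Proof. by rewrite sumnE (big_nth 0) big_mkord. Qed.

Lemma sum_cs mu (hm : isp mu) : (\sum_(i < size mu) cs mu i)%N = sumn mu.
Proof.
have H : forall i : 'I_(size mu), (cs mu i + i = nth 0 mu i + sstar hm i)%N.
  move=> i; rewrite sstarE; have := cs_ws hm (ltn_ord i); have := ws_lt hm (ltn_ord i).
  have := ltn_ord i; rewrite /bb; move: (cs mu i) (ws mu i) (nth 0 mu i) (i : nat) => a b c d.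
  lia.
have e : (\sum_(i < size mu) (cs mu i + i) = \sum_(i < size mu) (nth 0 mu i + sstar hm i))%N.
  by apply: eq_bigr => i _; exact: H i.
rewrite !big_split /= in e.
rewrite [X in (_ + X)%N = _](reindex_inj (@perm_inj _ (sstar hm))) /= in e.
have := sum_nth mu; move: e => e1 e2; rewrite -e2; apply: (@addIn (\sum_(i < size mu) sstar hm i)); exact: e1.
Qed.

Lemma al0_sum mu (hm : isp mu) (hs : 0 < sumn mu) : sumn (al0 mu) = sumn mu.
Proof.
have hl : 0 < size mu by case: mu hs hm.
rewrite -sum_nth -(sum_cs hm).
rewrite (partition_big (fstar hl) predT) //=; apply: eq_bigr => i _.
rewrite -(csum_fstar hm hs hl i) /csum; by apply: eq_bigl => u.
Qed.

Lemma a0_ct mu (hm : isp mu) (hs : 0 < sumn mu) : cycle_type (a0 mu).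
Proof.
apply/eqP; transitivity (sumn (al0 mu)); last exact: al0_sum hm hs.
rewrite al0E // [RHS]sumnE big_map big_filter big_enum_cond /=.
rewrite [RHS]big_mkcond /=; apply: eq_bigr => k _; rewrite /a0 ffunE inordK.
  by case: (_ \in _); rewrite ?muln1 ?muln0.
by case: (_ \in _) => //=; rewrite ltnS.
Qed.

Lemma chi_nz mu (hm : isp mu) (hs : 0 < sumn mu) : chi mu (al0 mu) != 0%R.
Proof.
have hl : 0 < size mu by case: mu hs hm.
rewrite chiE (bigD1 (sstar hm)) //= big1 ?GRing.addr0.
  rewrite GRing.mulf_neq0 ?signr_eq0 //.
  have h : 0 < #|[set f : {ffun 'I_(size (al0 mu)) -> 'I_(size mu)} | valid (sstar hm) f]|.
    by apply/card_gt0P; exists (fstar hl); rewrite inE fstar_valid.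
  by rewrite eqz_nat -lt0n.
move=> s ns.
have -> : [set f : {ffun 'I_(size (al0 mu)) -> 'I_(size mu)} | valid s f] = set0.
  apply/setP => f; rewrite inE in_set0; apply/negP => V.
  by move: ns; rewrite (valid_uniq hm hs V) eqxx.
by rewrite cards0 GRing.mulr0.
Qed.

Definition wchi (mu : seq nat) (a : {ffun 'I_(sumn mu) -> 'I_(sumn mu).+1}) : rat :=
  ((chi mu (ct_parts a))%:~R / (zee a)%:R)%R.
Arguments wchi : clear implicits.

Lemma charpolyE mu : charpoly mu = falling (PP (wchi mu)).
Proof. by []. Qed.

Lemma ct_mem m (a : {ffun 'I_m -> 'I_m.+1}) (k : 'I_m) : 0 < a k -> k.+1 \in ct_parts a.
Proof.
move=> ak; apply/flattenP; exists (nseq (a k) k.+1); last by rewrite mem_nseq ak eqxx.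
by apply/mapP; exists k; rewrite ?mem_enum.
Qed.

Lemma main_mu (mu : seq nat) : isp mu -> 0 < size mu ->
  occurs (charpoly mu) (bb mu 0) /\
  (forall j, occurs (charpoly mu) j -> j <= bb mu 0).
Proof.
move=> hm hl.
have h1 : size mu <= bb mu 0 := big0 hm hl.
have h2 := sumn_ge hm.
have hs : 0 < sumn mu by lia.
split.
  have hi : (bb mu 0).-1 < sumn mu by lia.
  exists (ex (a0 mu)), (Ordinal hi); split => /=; first by lia.
    rewrite ffunE /a0 ffunE inordK /=.
      have -> : (bb mu 0).-1.+1 = cs mu 0 by rewrite /cs ws0 // subn0; lia.
      by rewrite -al0_mem // (cs_in_al0 hm hs hl (big0 hm hl)).
    by case: (_ \in _) => //=; rewrite ltnS.
  rewrite charpolyE coef_main ?a0_ct //.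
  rewrite GRing.mulf_neq0 //.
    rewrite /wchi GRing.mulf_neq0 ?GRing.invr_eq0 ?intr_eq0 -?/(al0 mu) ?chi_nz //.
    rewrite pnatr_eq0 -lt0n /zee prodn_gt0 // => k.
    by rewrite muln_gt0 fact_gt0 expn_gt0.
  rewrite prodf_seq_neq0; apply/allP => k _; apply/implyP => _.
  by rewrite expf_neq0 // pnatr_eq0.
move=> j [e [i [ij ei ce]]].
have [t tP [te tn]] := coef_nz ce.
have hv : vb (bb mu 0) (falling (PP (wchi mu))).
  apply: vb_falling; apply: vb_PP => a cta k hk ak.
  rewrite /wchi (chi_zero hm (ct_mem ak)) ?GRing.mul0r //; lia.
rewrite -charpolyE in hv; have := allP hv t tP; rewrite /vbt (negbTE tn) /=.
move/forallP => /(_ i); case: (leqP (bb mu 0) i) => //= hi.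
  by rewrite te => /eqP ei0; move: ei; rewrite ei0.
move=> _; lia.
Qed.

Lemma isp_behead la : is_partition la -> isp (behead la).
Proof.
case: la => [|x s] //= /andP[/path_sorted so /andP[_ al]]; by apply/andP.
Qed.

Lemma hook21 la : is_partition la -> 0 < hook la 2 1 ->
  0 < size (behead la) /\ hook la 2 1 = bb (behead la) 0.
Proof.
case: la => [|x [|y s]] //= hp; rewrite /hook /part /=.
case: ifP => // y1 _; split => //.
have : count (fun a => 0 < a) [:: x, y & s] = (size s).+2.
  by apply/eqP; rewrite -all_count; case/andP: hp.
rewrite /conj_part /bb /= => ->; lia.
Qed.

Lemma hook12 la : is_partition la -> 0 < hook la 1 2 ->
  isp (behead (conj_partition la)) /\ 0 < size (behead (conj_partition la)) /\
  hook la 1 2 = bb (behead (conj_partition la)) 0.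
Proof.
case: la => [|x s] // hp; rewrite /hook /part /=.
case: ifP => // x2 _.
have -> : behead (conj_partition (x :: s)) = [seq conj_part (x :: s) j.+1 | j <- iota 1 x.-1].
  by rewrite /conj_partition /mkseq /=; have -> : x = x.-1.+1 by lia.
have cp : forall i, i <= x -> 0 < conj_part (x :: s) i.
  by move=> i ix; rewrite /conj_part /= ix.
rewrite size_map size_iota.
split; last split.
- apply/andP; split.
    apply: homo_sorted; last exact: iota_sorted.
    move=> i j ij; rewrite /conj_part /=; apply: leq_add.
      by case hj: (j < x) => //=; rewrite (leq_ltn_trans ij hj).
    by apply: sub_count => a /=; apply: leq_trans.
  apply/allP => z /mapP[i]; rewrite mem_iota => /andP[i1 i2] ->; apply: cp; lia.
- lia.
- rewrite /bb size_map size_iota (nth_map 0) ?size_iota; last by lia.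
  rewrite nth_iota; last by lia.
  have := cp 2 x2; have -> : conj_part (x :: s) 2 = (1 < x) + conj_part s 2 by [].
  rewrite x2; move: (conj_part s 2) => c; lia.
Qed.

Theorem corollary3p2 (n : nat) (la : seq nat) :
  is_partition la -> sumn la = n ->
  ((0 < hook la 2 1)%N ->
     occurs (charpoly (behead la)) (hook la 2 1) /\
     (forall j, occurs (charpoly (behead la)) j -> (j <= hook la 2 1)%N)) /\
  ((0 < hook la 1 2)%N ->
     occurs (charpoly (behead (conj_partition la))) (hook la 1 2) /\
     (forall j, occurs (charpoly (behead (conj_partition la))) j -> (j <= hook la 1 2)%N)).
Proof.
move=> hp _; split => H.
  have [hl ->] := hook21 hp H; exact: main_mu (isp_behead hp) hl.
have [hm [hl ->]] := hook12 hp H; exact: main_mu hm hl.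
Qed.
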